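(* Let $\kappa$ be an infinite cardinal, $\alpha^*$ an ordinal, and $\bar A=\langle A_\alpha:\alpha<\alpha^*\rangle$ a sequence of subsets of $\kappa$ such that for each $\alpha<\alpha^*$, $A_\alpha$ does not belong to the ideal of subsets of $\kappa$ generated by $\{A_\beta:\beta<\alpha\}$. If $\mathrm{rk}_{\bar A}(\kappa)\ge\kappa^+$, then there is a sequence $\langle\alpha_n:n<\omega\rangle$ with $\alpha_n<\alpha_{n+1}<\kappa$ for all $n$, such that for every $\ell<k<\omega$ there is $\alpha<\alpha^*$ with $$A_\alpha\cap\{\alpha_\ell,\alpha_{\ell+1},\dots,\alpha_k\}=\{\alpha_{\ell+1},\dots,\alpha_k\}.$$
   Context: The rank $\mathrm{rk}_{\bar A}$ is the function from subsets of $\kappa$ to ordinals or $\infty$ defined by: $\mathrm{rk}_{\bar A}(A)\ge 0$ always, and $\mathrm{rk}_{\bar A}(A)\ge\zeta$ iff for every $\xi<\zeta$ there is $\alpha<\alpha^*$ such that $A\neq A\cap A_\alpha$ (i.e. $A\not\subseteq A_\alpha$) and $\mathrm{rk}_{\bar A}(A\cap A_\alpha)\ge\xi$. $\mathrm{rk}_{\bar A}(A)$ is the largest $\zeta$ with $\mathrm{rk}_{\bar A}(A)\ge\zeta$, or $\infty$ if it is $\ge\zeta$ for all ordinals $\zeta$. *)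

(* Defs.v *)
(* Ordinals are represented by well-ordered types. *)
From Stdlib Require Import List.
Import ListNotations.

Definition well_order {W : Type} (R : W -> W -> Prop) : Prop :=
  well_founded R /\
  (forall x y z, R x y -> R y z -> R x z) /\
  (forall x y, R x y \/ x = y \/ R y x).

(* (K, ltK) is (the well-ordered set of ordinals below) an infinite cardinal:
   a well-order, infinite, and not injectable into any
   proper initial segment. *)
Definition infinite_cardinal {K : Type} (ltK : K -> K -> Prop) : Prop :=
  well_order ltK /\
  (exists f : nat -> K, forall m n, f m = f n -> m = n) /\
  (forall (x : K) (g : K -> {y : K | ltK y x}),
      ~ (forall u v, g u = g v -> u = v)).

(* A_a does not belong to the ideal generated by {A_b : b < a}, i.e. it is not
   covered by finitely many A_b with b < a *)
Definition not_in_prev_ideal {K I : Type} (ltI : I -> I -> Prop)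
  (A : I -> K -> Prop) : Prop :=
  forall a : I, ~ (exists s : list I,
      (forall b, In b s -> ltI b a) /\
      (forall x, A a x -> exists b, In b s /\ A b x)).

(* rk_ge A R B w : "rk_{A}(B) >= zeta", where zeta is the ordinal (order type
   of the initial segment below w) of w in the well-order (W,R). *)
Inductive rk_ge {K I W : Type} (A : I -> K -> Prop) (R : W -> W -> Prop)
  : (K -> Prop) -> W -> Prop :=
| rk_ge_intro (B : K -> Prop) (w : W) :
    (forall v, R v w ->
       exists a : I, (exists x, B x /\ ~ A a x) /\
                     rk_ge A R (fun x => B x /\ A a x) v) ->
    rk_ge A R B w.

(* rk_{A}(kappa) >= kappa^+ : rank >= zeta for every ordinal zeta < kappa^+,
   i.e. every ordinal zeta of cardinality <= kappa. *)
Definition rk_ge_kappa_plus {K I : Type} (A : I -> K -> Prop) : Prop :=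
  forall (W : Type) (R : W -> W -> Prop), well_order R ->
  forall w : W,
    (exists g : {v : W | R v w} -> K, forall u v, g u = g v -> u = v) ->
    rk_ge A R (fun _ => True) w.

(* Main.v *)
Require Import Defs.
From Stdlib Require Import List Arith Lia Classical ClassicalEpsilon FunctionalExtensionality ProofIrrelevance.
From Stdlib Require Import Wellfounded.Inverse_Image.

Definition inj (A B : Type) : Prop := exists f : A -> B, forall a b, f a = f b -> a = b.
Definition fin (A : Type) : Prop := exists N, inj A {n : nat | n < N}.

Lemma sig_ext {A} {P : A -> Prop} (a b : {x | P x}) : proj1_sig a = proj1_sig b -> a = b.
Proof. destruct a as [a pa], b as [b pb]; simpl; intros ->. f_equal; apply proof_irrelevance. Qed.

Lemma inj_refl A : inj A A.
Proof. exists (fun x => x); auto. Qed.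

Lemma inj_trans A B C : inj A B -> inj B C -> inj A C.
Proof. intros [f Hf] [g Hg]; exists (fun x => g (f x)); auto. Qed.

Lemma inj_prod A B A' B' : inj A A' -> inj B B' -> inj (A*B) (A'*B').
Proof.
  intros [f Hf] [g Hg]; exists (fun p => (f (fst p), g (snd p))).
  intros [a b] [c d]; simpl; intros E; injection E; intros; f_equal; auto.
Qed.

Lemma fin_inj A B : inj A B -> fin B -> fin A.
Proof. intros H [N HN]; exists N; eapply inj_trans; eauto. Qed.

Lemma pigeon_nat : forall N (f : nat -> nat), (forall n, f n < N) ->
  (forall a b, f a = f b -> a = b) -> False.
Proof.
  induction N; intros f Hb Hi.
  - specialize (Hb 0); lia.
  - destruct (classic (exists n, f n = N)) as [[n Hn]|Hno].
    + apply (IHN (fun m => f (if m <? n then m else S m))).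
      * intro m. assert (f (if m <? n then m else S m) <> N).
        { intro E. rewrite <- Hn in E. apply Hi in E.
          destruct (Nat.ltb_spec m n); lia. }
        specialize (Hb (if m <? n then m else S m)); lia.
      * intros a b E. apply Hi in E.
        destruct (Nat.ltb_spec a n), (Nat.ltb_spec b n); lia.
    + apply (IHN f); auto. intro m. specialize (Hb m).
      assert (f m <> N) by (intro E; apply Hno; eauto). lia.
Qed.

Lemma pigeon N : ~ inj nat {n | n < N}.
Proof.
  intros [f Hf]. apply (pigeon_nat N (fun n => proj1_sig (f n))).
  - intro n; exact (proj2_sig (f n)).
  - intros a b E. apply Hf, sig_ext, E.
Qed.

Lemma fin_prod A B : fin A -> fin B -> fin (A*B).
Proof.
  intros [N [f Hf]] [M [g Hg]].
  assert (Hb : forall p : A*B, proj1_sig (f (fst p)) * M + proj1_sig (g (snd p)) < N*M).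
  { intros [a b]; simpl. destruct (f a) as [x Hx], (g b) as [y Hy]; simpl. nia. }
  exists (N*M). exists (fun p => exist (fun n => n < N*M) _ (Hb p)).
  intros [a b] [c d] E. simpl in E.
  assert (E' := f_equal (@proj1_sig _ _) E). simpl in E'. clear E.
  assert (Hx := proj2_sig (f a)); assert (Hx' := proj2_sig (f c)).
  assert (Hy := proj2_sig (g b)); assert (Hy' := proj2_sig (g d)).
  cbv beta in Hx, Hx', Hy, Hy'.
  remember (proj1_sig (f a)) as x eqn:Ex; remember (proj1_sig (f c)) as x' eqn:Ex'.
  remember (proj1_sig (g b)) as y eqn:Ey; remember (proj1_sig (g d)) as y' eqn:Ey'.
  assert (x = x' /\ y = y') as [E1 E2].
  { destruct (lt_eq_lt_dec x x') as [[H|H]|H]; [assert (x*M + M <= x'*M) by nia; lia| |assert (x'*M + M <= x*M) by nia; lia]. split; [exact H | rewrite H in E'; lia]. }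
  f_equal; [apply Hf | apply Hg]; apply sig_ext; congruence.
Qed.

Lemma fin_option A : fin A -> fin (option A).
Proof.
  intros [N [f Hf]].
  assert (Hb : forall o : option A, match o with None => N | Some a => proj1_sig (f a) end < S N).
  { intros [a|]; [destruct (f a); simpl; lia | lia]. }
  exists (S N); exists (fun o => exist (fun n => n < S N) _ (Hb o)).
  intros [a|] [b|] E; apply (f_equal (@proj1_sig _ _)) in E; simpl in E; auto.
  - f_equal; apply Hf, sig_ext, E.
  - destruct (f a); simpl in *; lia.
  - destruct (f b); simpl in *; lia.
Qed.

Lemma not_fin_two A : ~ fin A -> exists a b : A, a <> b.
Proof.
  intros H. apply NNPP; intro C. apply H. exists 1.
  assert (Hb : 0 < 1) by lia. exists (fun _ => exist _ 0 Hb).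
  intros a b _. apply NNPP; intro D; apply C; eauto.
Qed.

Lemma option_inj_sq A : (exists a b : A, a <> b) -> inj (option A) (A*A).
Proof.
  intros [a [b Hab]]. exists (fun o => match o with None => (a,b) | Some x => (x,x) end).
  intros [x|] [y|] E; try injection E; intros; subst; auto; congruence.
Qed.

Lemma nat_not_fin A : inj nat A -> ~ fin A.
Proof. intros H [N HN]. apply (pigeon N). eapply inj_trans; eauto. Qed.

Definition pd {K : Type} (ltK : K -> K -> Prop) (x : K) : Type := {y : K | ltK y x}.
Definition Hs {K : Type} (ltK : K -> K -> Prop) (x : K) : Prop :=
  fin (pd ltK x) \/ inj (pd ltK x * pd ltK x) (pd ltK x).

Definition mx {K} (ltK : K -> K -> Prop) (a b : K) : K :=
  if excluded_middle_informative (ltK a b) then b else a.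
Definition leK {K} (ltK : K->K->Prop) (a b : K) := ltK a b \/ a = b.

Lemma mx_l K (ltK : K -> K -> Prop) a b : leK ltK a (mx ltK a b).
Proof. unfold mx, leK; destruct (excluded_middle_informative _); auto. Qed.

Lemma mx_r K (ltK : K -> K -> Prop) (wo : well_order ltK) a b : leK ltK b (mx ltK a b).
Proof.
  destruct wo as [_ [_ Htri]]. unfold mx, leK; destruct (excluded_middle_informative _); auto.
  destruct (Htri a b) as [H|[H|H]]; [contradiction | auto | auto].
Qed.

Lemma mx_cases K (ltK : K -> K -> Prop) a b : mx ltK a b = a \/ mx ltK a b = b.
Proof. unfold mx; destruct (excluded_middle_informative _); auto. Qed.

Lemma le_lt_trans K (ltK : K -> K -> Prop) (wo : well_order ltK) a b c :
  leK ltK a b -> ltK b c -> ltK a c.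
Proof. destruct wo as [_ [Htr _]]. intros [H | ->] H2; eauto. Qed.

Lemma le_trans' K (ltK : K -> K -> Prop) (wo : well_order ltK) a b c :
  leK ltK a b -> leK ltK b c -> leK ltK a c.
Proof. destruct wo as [_ [Htr _]]. unfold leK. intros [H | ->] [H2 | <-]; eauto. Qed.

Definition lex {A B} (RA : A->A->Prop) (RB : B->B->Prop) (p q : A*B) :=
  RA (fst p) (fst q) \/ (fst p = fst q /\ RB (snd p) (snd q)).

Lemma lex_wf A B (RA : A->A->Prop) (RB : B->B->Prop) :
  well_founded RA -> well_founded RB -> well_founded (lex RA RB).
Proof.
  intros HA HB [a b]. revert b. induction (HA a) as [a _ IHa]. intro b.
  induction (HB b) as [b _ IHb]. constructor. intros [a' b'] [H|[E H]]; simpl in *.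
  - apply IHa; exact H.
  - subst a'. apply IHb; exact H.
Qed.

Definition key {K} (ltK : K -> K -> Prop) (p : K*K) : K*(K*K) := (mx ltK (fst p) (snd p), p).
Definition God {K} (ltK : K -> K -> Prop) (p q : K*K) : Prop :=
  lex ltK (lex ltK ltK) (key ltK p) (key ltK q).

Lemma God_wf K (ltK : K -> K -> Prop) : well_founded ltK -> well_founded (God ltK).
Proof. intro H. unfold God. apply wf_inverse_image. apply lex_wf; [exact H| apply lex_wf; exact H]. Qed.

Lemma God_tri K (ltK : K -> K -> Prop) (wo : well_order ltK) p q :
  God ltK p q \/ p = q \/ God ltK q p.
Proof.
  destruct wo as [_ [_ Htri]]. unfold God, lex, key; simpl.
  destruct p as [a b], q as [c d]; simpl.
  destruct (Htri (mx ltK a b) (mx ltK c d)) as [H|[H|H]]; [left; left; exact H| |right; right; left; exact H].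
  rewrite H.
  destruct (Htri a c) as [H1|[H1|H1]];
    [left; right; split; [reflexivity| left; exact H1] | |right; right; right; split; [reflexivity| left; exact H1]].
  subst c.
  destruct (Htri b d) as [H2|[H2|H2]];
    [left; right; split; [reflexivity| right; split; [reflexivity|exact H2]] | subst; auto
    |right; right; right; split; [reflexivity| right; split; [reflexivity|exact H2]]].
Qed.

Lemma God_mx K (ltK : K -> K -> Prop) p q :
  God ltK q p -> leK ltK (mx ltK (fst q) (snd q)) (mx ltK (fst p) (snd p)).
Proof. unfold God, lex, key, leK; simpl. intros [H|[H _]]; auto. Qed.

Lemma core (K : Type) (ltK : K -> K -> Prop) (wo : well_order ltK) (k0 : K) (D : K -> Prop)
  (Dinf : ~ fin {a | D a})
  (Dcard : forall y, D y -> ~ inj {a | D a} (pd ltK y))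
  (IH : forall y, D y -> Hs ltK y) :
  inj ({a | D a} * {a | D a}) {a | D a}.
Proof.
  pose proof wo as [Hwf [Htr Htri]].
  assert (Above : forall m, D m -> exists m', D m' /\ ltK m m').
  { intros m Dm. apply NNPP; intro C.
    assert (Hi : inj {a | D a} (option (pd ltK m))).
    { exists (fun a => match excluded_middle_informative (ltK (proj1_sig a) m) with
         | left h => Some (exist _ (proj1_sig a) h) | right _ => None end).
      intros [a Da] [b Db]; simpl.
      destruct (excluded_middle_informative (ltK a m)), (excluded_middle_informative (ltK b m));
        intro E; try discriminate.
      - apply sig_ext; simpl.
        apply (f_equal (fun o => match o with Some s => proj1_sig s | None => a end)) in E.
        exact E.
      - apply sig_ext; simpl.
        assert (a = m).
        { destruct (Htri a m) as [?|[?|?]]; [contradiction|assumption|exfalso; apply C; eauto]. }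
        assert (b = m).
        { destruct (Htri b m) as [?|[?|?]]; [contradiction|assumption|exfalso; apply C; eauto]. }
        congruence. }
    destruct (IH m Dm) as [Hf|Hsq].
    - apply Dinf. eapply fin_inj; [exact Hi| apply fin_option; exact Hf].
    - assert (Hnf : ~ fin (pd ltK m)).
      { intro Hf. apply Dinf. eapply fin_inj; [exact Hi| apply fin_option; exact Hf]. }
      apply (Dcard m Dm). eapply inj_trans; [exact Hi|].
      eapply inj_trans; [apply option_inj_sq, not_fin_two, Hnf | exact Hsq]. }
  pose (inhK := inhabits k0).
  pose (body := fun (p : K*K) (rec : forall q, God ltK q p -> K) =>
     epsilon inhK (fun z => D z /\ forall q (h : God ltK q p), D (fst q) -> D (snd q) -> rec q h <> z)).
  pose (F := Fix (God_wf K ltK Hwf) (fun _ => K) body).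
  assert (Feq : forall p, F p = epsilon inhK (fun z => D z /\
             forall q, God ltK q p -> D (fst q) -> D (snd q) -> F q <> z)).
  { intro p. unfold F. rewrite Fix_eq.
    - reflexivity.
    - intros x f g Hfg. assert (f = g) as ->.
      { extensionality y; extensionality h; apply Hfg. }
      reflexivity. }
  assert (Ex : forall p, D (fst p) -> D (snd p) -> exists z, D z /\
             forall q, God ltK q p -> D (fst q) -> D (snd q) -> F q <> z).
  { intros p D1 D2. apply NNPP; intro C.
    assert (Hz : forall z, D z -> exists q, God ltK q p /\ D (fst q) /\ D (snd q) /\ F q = z).
    { intros z Dz. apply NNPP; intro C2. apply C. exists z; split; auto.
      intros q Hq Dq1 Dq2 E. apply C2; eauto. }
    set (m := mx ltK (fst p) (snd p)).
    assert (Dm : D m).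
    { destruct (mx_cases K ltK (fst p) (snd p)) as [E|E]; unfold m; rewrite E; assumption. }
    destruct (Above m Dm) as [m' [Dm' Hmm']].
    assert (Hlt : forall q, God ltK q p -> ltK (fst q) m' /\ ltK (snd q) m').
    { intros q Hq. pose proof (God_mx K ltK p q Hq) as Hle.
      split; eapply le_lt_trans; try exact wo; try exact Hmm';
        (eapply le_trans'; [exact wo| |exact Hle]); [apply mx_l| apply mx_r; exact wo]. }
    assert (Hi : inj {a | D a} (pd ltK m' * pd ltK m')).
    { assert (G : forall z : {a | D a}, {r : pd ltK m' * pd ltK m' |
                    F (proj1_sig (fst r), proj1_sig (snd r)) = proj1_sig z}).
      { intros [z Dz]. destruct (constructive_indefinite_description _ (Hz z Dz))
          as [[q1 q2] [Hq [_ [_ Efq]]]].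
        destruct (Hlt _ Hq) as [L1 L2]. exists (exist _ q1 L1, exist _ q2 L2). simpl. exact Efq. }
      exists (fun z => proj1_sig (G z)). intros a b E. apply sig_ext.
      rewrite <- (proj2_sig (G a)), <- (proj2_sig (G b)), E. reflexivity. }
    destruct (IH m' Dm') as [Hf|Hsq].
    - apply Dinf. eapply fin_inj; [exact Hi | apply fin_prod; exact Hf].
    - apply (Dcard m' Dm'). eapply inj_trans; eauto. }
  assert (Fs : forall p, D (fst p) -> D (snd p) -> D (F p) /\
             forall q, God ltK q p -> D (fst q) -> D (snd q) -> F q <> F p).
  { intros p D1 D2. pose proof (epsilon_spec inhK _ (Ex p D1 D2)) as H.
    rewrite <- Feq in H. exact H. }
  assert (G : forall ab : {a|D a} * {a|D a},
             {z : {a | D a} | proj1_sig z = F (proj1_sig (fst ab), proj1_sig (snd ab))}).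
  { intros [[a Da] [b Db]]. exists (exist _ (F (a,b)) (proj1 (Fs (a,b) Da Db))). reflexivity. }
  exists (fun ab => proj1_sig (G ab)).
  intros [[a Da] [b Db]] [[c Dc] [d Dd]] E.
  revert E. destruct (G (exist _ a Da, exist _ b Db)) as [z1 Hz1].
  destruct (G (exist _ c Dc, exist _ d Dd)) as [z2 Hz2]. simpl in *. intro E. subst z2.
  assert (E : F (a,b) = F (c,d)) by congruence.
  destruct (God_tri K ltK wo (a,b) (c,d)) as [H|[H|H]].
  - exfalso. exact (proj2 (Fs (c,d) Dc Dd) (a,b) H Da Db E).
  - injection H; intros; subst. f_equal; apply sig_ext; reflexivity.
  - exfalso. exact (proj2 (Fs (a,b) Da Db) (c,d) H Dc Dd (eq_sym E)).
Qed.

Lemma Hs_all K (ltK : K -> K -> Prop) (wo : well_order ltK) (k0 : K) : forall x, Hs ltK x.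
Proof.
  pose proof wo as [Hwf [Htr Htri]].
  intro x. induction (Hwf x) as [x _ IHx].
  destruct (classic (fin (pd ltK x))) as [Hf|Hnf]; [left; exact Hf| right].
  destruct (classic (exists y, ltK y x /\ inj (pd ltK x) (pd ltK y))) as [[y [Hy Hi]]|Hno].
  - destruct (IHx y Hy) as [Hf|Hsq].
    + exfalso; apply Hnf; eapply fin_inj; eauto.
    + assert (incl : inj (pd ltK y) (pd ltK x)).
      { exists (fun v => exist (fun z => ltK z x) (proj1_sig v) (Htr _ _ _ (proj2_sig v) Hy)).
        intros u v E. apply sig_ext. apply (f_equal (@proj1_sig _ _)) in E. exact E. }
      eapply inj_trans; [apply inj_prod; exact Hi|].
      eapply inj_trans; [exact Hsq| exact incl].
  - apply (core K ltK wo k0 (fun a => ltK a x)).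
    + exact Hnf.
    + intros y Hy Hi; apply Hno; eauto.
    + intros y Hy; apply IHx; exact Hy.
Qed.

Lemma KK_inj K (ltK : K -> K -> Prop) (wo : well_order ltK)
  (Hinf : exists f : nat -> K, forall m n, f m = f n -> m = n)
  (Hcard : forall (x : K) (g : K -> {y : K | ltK y x}), ~ (forall u v, g u = g v -> u = v)) :
  inj (K*K) K.
Proof.
  destruct Hinf as [f0 Hf0].
  assert (iso1 : inj K {a : K | True}).
  { exists (fun a => exist _ a I); intros a b E; apply (f_equal (@proj1_sig _ _)) in E; exact E. }
  assert (iso2 : inj {a : K | True} K).
  { exists (@proj1_sig _ _); intros a b E; apply sig_ext, E. }
  assert (H : inj ({a : K | True} * {a : K | True}) {a : K | True}).
  { apply (core K ltK wo (f0 0) (fun _ => True)).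
    - intro Hf. apply (nat_not_fin {a : K | True}); [|exact Hf].
      eapply inj_trans; [exists f0; exact Hf0 | exact iso1].
    - intros y _ [g Hg]. apply (Hcard y (fun a => g (exist _ a I))).
      intros u v E. apply Hg in E. apply (f_equal (@proj1_sig _ _)) in E. exact E.
    - intros y _. apply Hs_all; auto. }
  eapply inj_trans; [apply inj_prod; exact iso1|].
  eapply inj_trans; [exact H| exact iso2].
Qed.

Lemma rk_inv {K I W} (A : I -> K -> Prop) (R : W -> W -> Prop) B w :
  rk_ge A R B w -> forall v, R v w ->
  exists a : I, (exists x, B x /\ ~ A a x) /\ rk_ge A R (fun x => B x /\ A a x) v.
Proof. intros H; destruct H as [B w Hf]; exact Hf. Qed.

Lemma rk_sim {K I W1 W2} (A : I -> K -> Prop) (R1 : W1 -> W1 -> Prop) (R2 : W2 -> W2 -> Prop)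
  (M : W1 -> W2 -> Prop) (HM : forall v o, M v o -> forall u, R1 u v -> exists u', R2 u' o /\ M u u') :
  forall (B : K -> Prop) (o : W2), rk_ge A R2 B o -> forall v, M v o -> rk_ge A R1 B v.
Proof.
  fix IH 3. intros B o H. destruct H as [B o Hf]. intros v Hm. constructor. intros u Hu.
  destruct (HM v o Hm u Hu) as [u' [Hu' Hm']].
  destruct (Hf u' Hu') as [a [Hx Hr]]. exists a. split; [exact Hx|].
  exact (IH _ u' Hr u Hm').
Qed.

Definition Big {K I : Type} (A : I -> K -> Prop) (F : (K -> Prop) -> Prop) : Prop :=
  forall (W : Type) (R : W -> W -> Prop), well_order R -> forall w : W,
    (exists g : {v : W | R v w} -> K, forall u v, g u = g v -> u = v) ->
    exists C, F C /\ rk_ge A R C w.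

Definition Fn {K I : Type} (A : I -> K -> Prop) (y : K) (F : (K -> Prop) -> Prop) : (K -> Prop) -> Prop :=
  fun C' => exists C a, F C /\ C y /\ ~ A a y /\ C' = (fun x => C x /\ A a x).

Definition ltopt {K : Type} (S : K -> Prop) (T : K -> K -> Prop) (o1 o2 : option {a | S a}) : Prop :=
  match o1, o2 with
  | Some a, Some b => T (proj1_sig a) (proj1_sig b)
  | Some _, None => True
  | _, _ => False
  end.

Definition goodST {K I : Type} (A : I -> K -> Prop) (P : (K -> Prop) -> Prop) (S : K -> Prop) (T : K -> K -> Prop) : Prop :=
  well_founded T /\ (forall a b c, T a b -> T b c -> T a c) /\
  (forall a b, S a -> S b -> T a b \/ a = b \/ T b a) /\
  ~ (exists C', P C' /\ rk_ge A (ltopt S T) C' None).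

Lemma transport {K I W : Type} (A : I -> K -> Prop) (P : (K -> Prop) -> Prop)
  (R : W -> W -> Prop) (wo : well_order R) (w : W)
  (g : {v : W | R v w} -> K) (Hg : forall u v, g u = g v -> u = v)
  (Hfail : ~ exists C', P C' /\ rk_ge A R C' w) :
  exists ST : (K -> Prop) * (K -> K -> Prop), goodST A P (fst ST) (snd ST).
Proof.
  destruct wo as [Rwf [Rtr Rtri]].
  pose (S := fun a => exists v, g v = a).
  pose (T := fun a b => exists v1 v2, g v1 = a /\ g v2 = b /\ R (proj1_sig v1) (proj1_sig v2)).
  exists (S, T); simpl. split; [|split; [|split]].
  - assert (Hacc : forall x, Acc R x -> forall v, proj1_sig v = x -> Acc T (g v)).
    { intros x Hx. induction Hx as [x _ IHx]. intros v Ev. constructor.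
      intros b [v1 [v2 [E1 [E2 Hr]]]]. apply Hg in E2. subst v2 b.
      apply (IHx (proj1_sig v1)); [rewrite <- Ev; exact Hr | reflexivity]. }
    intro a. destruct (classic (exists v, g v = a)) as [[v <-]|Hn].
    + apply (Hacc (proj1_sig v)); [apply Rwf | reflexivity].
    + constructor. intros b [v1 [v2 [_ [E2 _]]]]. exfalso; eauto.
  - intros a b c [v1 [v2 [E1 [E2 H12]]]] [v3 [v4 [E3 [E4 H34]]]].
    subst. apply Hg in E3. subst v3. exists v1, v4. eauto.
  - intros a b [v <-] [v' <-]. destruct (Rtri (proj1_sig v) (proj1_sig v')) as [H|[H|H]].
    + left; exists v, v'; auto.
    + right; left. f_equal. apply sig_ext, H.
    + right; right; exists v', v; auto.
  - intros [C' [HP Hr]]. apply Hfail. exists C'; split; [exact HP|].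
    pose (M := fun (v : W) (o : option {a | S a}) => (v = w /\ o = None) \/
             (exists h : R v w, o = Some (exist S (g (exist _ v h)) (ex_intro _ _ eq_refl)))).
    apply (rk_sim A R (ltopt S T) M) with (o := None); [| exact Hr | left; auto].
    intros v o [[-> ->]|[h ->]] u Hu.
    + exists (Some (exist S (g (exist _ u Hu)) (ex_intro _ _ eq_refl))). split; [exact Logic.I|].
      right. exists Hu. reflexivity.
    + assert (Hu' : R u w) by eauto.
      exists (Some (exist S (g (exist _ u Hu')) (ex_intro _ _ eq_refl))). split.
      * simpl. exists (exist _ u Hu'), (exist _ v h). simpl. auto.
      * right. exists Hu'. reflexivity.
Qed.

Lemma big_step {K I : Type} (ltK : K -> K -> Prop) (A : I -> K -> Prop) (wo : well_order ltK)
  (KK : inj (option (K*K)) K) (F : (K -> Prop) -> Prop) :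
  Big A F -> exists y, Big A (Fn A y F).
Proof.
  intros HB. apply NNPP; intro C.
  assert (Hy : forall y, exists ST : (K -> Prop) * (K -> K -> Prop),
                 goodST A (Fn A y F) (fst ST) (snd ST)).
  { intro y. assert (Hn : ~ Big A (Fn A y F)) by (intro H; apply C; eauto).
    unfold Big in Hn.
    apply not_all_ex_not in Hn as [W Hn]. apply not_all_ex_not in Hn as [R Hn].
    apply not_all_ex_not in Hn as [woR Hn]. apply not_all_ex_not in Hn as [w Hn].
    apply imply_to_and in Hn as [[g Hg] Hn].
    exact (transport A (Fn A y F) R woR w g Hg Hn). }
  apply choice in Hy as [Sf HSf].
  pose (S := fun y => fst (Sf y)). pose (T := fun y => snd (Sf y)).
  pose (Q := {p : K*K | S (fst p) (snd p)}).
  pose (ltQ := fun (p q : Q) => ltK (fst (proj1_sig p)) (fst (proj1_sig q)) \/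
       (fst (proj1_sig p) = fst (proj1_sig q) /\
        T (fst (proj1_sig q)) (snd (proj1_sig p)) (snd (proj1_sig q)))).
  pose (ltW := fun (o1 o2 : option (option Q)) =>
    match o1, o2 with
    | Some (Some p), Some (Some q) => ltQ p q
    | Some (Some _), Some None => True
    | Some _, None => True
    | _, _ => False
    end).
  destruct wo as [Kwf [Ktr Ktri]].
  assert (woW : well_order ltW).
  { split; [|split].
    - assert (Hq : forall y b (h : S y b), Acc ltW (Some (Some (exist _ (y,b) h)))).
      { intro y. induction (Kwf y) as [y _ IHy]. intro b.
        destruct (HSf y) as [Twf _]. induction (Twf b) as [b _ IHb]. intro h.
        constructor. intros [[[[y' b'] h']|]|] Hlt; simpl in Hlt; try contradiction.
        destruct Hlt as [Hlt|[Ey Hlt]]; simpl in *.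
        - apply IHy; exact Hlt.
        - subst y'. apply IHb. exact Hlt. }
      assert (Hsn : Acc ltW (Some None)).
      { constructor. intros [[[[y' b'] h']|]|] Hlt; simpl in Hlt; try contradiction. apply Hq. }
      intros [[[[y b] h]|]|].
      + apply Hq.
      + exact Hsn.
      + constructor. intros [[[[y' b'] h']|]|] Hlt; simpl in Hlt; try contradiction.
        * apply Hq.
        * exact Hsn.
    - intros [[p|]|] [[q|]|] [[r|]|]; simpl; try tauto.
      destruct p as [[y1 b1] h1], q as [[y2 b2] h2], r as [[y3 b3] h3]; unfold ltQ; simpl.
      intros [H1|[E1 H1]] [H2|[E2 H2]].
      + left; eauto.
      + subst; left; auto.
      + subst; left; auto.
      + subst. right; split; [reflexivity|]. destruct (HSf y3) as [_ [Ttr _]]. exact (Ttr _ _ _ H1 H2).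
    - intros [[p|]|] [[q|]|]; simpl; auto.
      destruct p as [[y1 b1] h1], q as [[y2 b2] h2]; unfold ltQ; simpl.
      destruct (Ktri y1 y2) as [H|[H|H]]; auto.
      subst y2. destruct (HSf y1) as [_ [_ [Ttri _]]].
      destruct (Ttri b1 b2 h1 h2) as [H|[H|H]]; auto.
      subst b2. right; left. repeat f_equal. apply proof_irrelevance. }
  assert (small : exists g : {v | ltW v None} -> K, forall u v, g u = g v -> u = v).
  { destruct KK as [k Hk].
    exists (fun v => match proj1_sig v with
                  | Some (Some p) => k (Some (proj1_sig p))
                  | _ => k None end).
    intros [[[p|]|] Hu] [[[q|]|] Hv]; simpl; intro E; try contradiction; apply Hk in E;
      try discriminate; apply sig_ext; simpl; try reflexivity.
    injection E; intro E'. f_equal. f_equal. apply sig_ext; exact E'. }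
  destruct (HB _ ltW woW None small) as [C0 [HC0 Hr]].
  destruct (rk_inv A ltW C0 None Hr (Some None) Logic.I) as [a [[y [Cy Nay]] Hr2]].
  destruct (HSf y) as [_ [_ [_ Hfail]]]. apply Hfail.
  exists (fun x => C0 x /\ A a x). split.
  - exists C0, a. auto.
  - pose (M := fun (o : option {b | S y b}) (v : option (option Q)) =>
         (o = None /\ v = Some None) \/
         (exists s, o = Some s /\ v = Some (Some (exist _ (y, proj1_sig s) (proj2_sig s))))).
    apply (rk_sim A (ltopt (S y) (T y)) ltW M) with (o := Some None); [| exact Hr2 | left; auto].
    intros o v [[-> ->]|[s [-> ->]]] u Hu.
    + destruct u as [s|]; simpl in Hu; try contradiction.
      exists (Some (Some (exist _ (y, proj1_sig s) (proj2_sig s)))). split; [exact Logic.I|].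
      right. exists s; auto.
    + destruct u as [s'|]; simpl in Hu; try contradiction.
      exists (Some (Some (exist _ (y, proj1_sig s') (proj2_sig s')))). split.
      * simpl. unfold ltQ; simpl. right; auto.
      * right. exists s'; auto.
Qed.

Lemma wf_min {X : Type} (R : X -> X -> Prop) (Hwf : well_founded R) (P : X -> Prop) :
  (exists x, P x) -> exists x, P x /\ forall y, P y -> ~ R y x.
Proof.
  intros [x Px]. apply NNPP; intro C.
  assert (H : forall z, Acc R z -> ~ P z).
  { intros z Hz. induction Hz as [z _ IH]. intro Pz. apply C. exists z. split; auto.
    intros y Py Ry. exact (IH y Ry Py). }
  exact (H x (Hwf x) Px).
Qed.

Lemma incr_subseq {K : Type} (ltK : K -> K -> Prop) (wo : well_order ltK) (z : nat -> K)
  (Hz : forall m n, z m = z n -> m = n) :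
  exists s : nat -> nat, (forall n, s n < s (S n)) /\ (forall n, ltK (z (s n)) (z (s (S n)))).
Proof.
  destruct wo as [Kwf [Ktr Ktri]].
  pose (nxt := fun n => epsilon (inhabits 0) (fun j => n < j /\ forall j', n < j' -> ~ ltK (z j') (z j))).
  assert (Hn : forall n, n < nxt n /\ forall j', n < j' -> ~ ltK (z j') (z (nxt n))).
  { intro n. apply epsilon_spec.
    destruct (wf_min ltK Kwf (fun k => exists j, n < j /\ z j = k)) as [k [[j [Hj <-]] Hmin]].
    - exists (z (S n)), (S n); split; [lia | reflexivity].
    - exists j. split; auto. intros j' Hj' Hlt. apply (Hmin (z j')); eauto. }
  pose (s := fix s n := match n with 0 => nxt 0 | S m => nxt (s m) end).
  exists s.
  assert (Hs : forall n, exists q, s n = nxt q).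
  { intros [|n]; [exists 0 | exists (s n)]; reflexivity. }
  split.
  - intro n. simpl. apply Hn.
  - intro n. destruct (Hs n) as [q Eq].
    assert (L1 : s n < s (S n)) by (simpl; apply Hn).
    assert (L0 : q < s n) by (rewrite Eq; apply Hn).
    assert (NL : ~ ltK (z (s (S n))) (z (s n))) by (rewrite Eq; apply Hn; lia).
    destruct (Ktri (z (s n)) (z (s (S n)))) as [H|[H|H]]; auto.
    + apply Hz in H. lia.
    + contradiction.
Qed.

Lemma mono_lt (s : nat -> nat) (Hs : forall n, s n < s (S n)) : forall a b, a < b -> s a < s b.
Proof.
  intros a b H. induction H as [|b H IH].
  - apply Hs.
  - specialize (Hs b). lia.
Qed.

Lemma mono_le (s : nat -> nat) (Hs : forall n, s n < s (S n)) : forall a b, a <= b -> s a <= s b.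
Proof.
  intros a b H. destruct (Nat.eq_dec a b) as [->|H']; [lia|].
  assert (s a < s b) by (apply mono_lt; auto; lia). lia.
Qed.

Theorem claim2p3 (K : Type) (ltK : K -> K -> Prop) (I : Type)
  (ltI : I -> I -> Prop) (A : I -> K -> Prop) :
  infinite_cardinal ltK ->
  well_order ltI ->
  not_in_prev_ideal ltI A ->
  rk_ge_kappa_plus A ->
  exists f : nat -> K,
    (forall n, ltK (f n) (f (S n))) /\
    (forall l k, l < k ->
       exists a : I, forall x,
         (A a x /\ (exists i, l <= i <= k /\ x = f i)) <->
         (exists i, l < i <= k /\ x = f i)).
Proof.
  intros [wo [Hinf Hcard]] _ _ Hrk.
  destruct Hinf as [f0 Hf0].
  assert (KK2 : inj (K*K) K) by (apply (KK_inj K ltK wo); eauto).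
  assert (KK : inj (option (K*K)) K).
  { apply (inj_trans _ ((K*K)*(K*K))).
    2: { eapply inj_trans; [apply inj_prod; exact KK2| exact KK2]. }
    apply (option_inj_sq (K*K)).
    exists (f0 0, f0 0), (f0 1, f0 0). intro E. injection E; intros E1. apply Hf0 in E1. discriminate. }
  pose (F0 := fun C : K -> Prop => C = fun _ => True).
  assert (B0 : Big A F0).
  { intros W R woR w sm. exists (fun _ => True). split; [reflexivity|]. apply Hrk; auto. }
  pose (next := fun F => epsilon (inhabits (f0 0)) (fun y => Big A (Fn A y F))).
  pose (state := fix st n := match n with 0 => F0 | S m => Fn A (next (st m)) (st m) end).
  pose (x := fun n => next (state n)).
  assert (Bs : forall n, Big A (state n)).
  { induction n as [|n IH]; [exact B0|]. simpl. apply epsilon_spec.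
    apply (big_step ltK A wo KK); exact IH. }
  assert (Inv : forall n C, state n C -> forall l, l < n -> exists a, ~ A a (x l) /\
                  (forall z, C z -> A a z) /\ (forall j, l < j < n -> A a (x j))).
  { induction n as [|n IH]; intros C HC l Hl; [lia|].
    destruct HC as [C1 [a [HC1 [Cy [Na ->]]]]].
    destruct (Nat.eq_dec l n) as [->|Hne].
    - exists a. split; [exact Na|]. split; [intros z [_ Hz]; exact Hz| intros; lia].
    - destruct (IH C1 HC1 l ltac:(lia)) as [a' [Na' [Sub' Hj']]].
      exists a'. split; [exact Na'|]. split; [intros z [Hz _]; auto|].
      intros j Hj. destruct (Nat.eq_dec j n) as [->|Hjn]; [apply Sub'; exact Cy|apply Hj'; lia]. }
  assert (Ne : forall n, exists C, state n C).
  { intro n. destruct (Bs n unit (fun _ _ => False)) with (w := tt) as [C [HC _]].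
    - split; [|split].
      + intro u; constructor; intros; contradiction.
      + intros; contradiction.
      + intros [] []; auto.
    - exists (fun v => False_rect K (proj2_sig v)). intros [u []].
    - eauto. }
  assert (Pk : forall l k, l < k -> exists a, ~ A a (x l) /\ forall j, l < j <= k -> A a (x j)).
  { intros l k Hlk. destruct (Ne (S k)) as [C HC].
    destruct (Inv (S k) C HC l ltac:(lia)) as [a [Na [_ Hj]]].
    exists a. split; auto. intros j Hj'; apply Hj; lia. }
  assert (Xinj : forall m n, x m = x n -> m = n).
  { intros m n E. destruct (lt_eq_lt_dec m n) as [[H|H]|H]; auto; exfalso.
    - destruct (Pk m n H) as [a [Na Hj]]. apply Na. rewrite E. apply Hj; lia.
    - destruct (Pk n m H) as [a [Na Hj]]. apply Na. rewrite <- E. apply Hj; lia. }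
  destruct (incr_subseq ltK wo x Xinj) as [s [Hs1 Hs2]].
  exists (fun n => x (s n)). split; [exact Hs2|].
  intros l k Hlk.
  destruct (Pk (s l) (s k) (mono_lt s Hs1 l k Hlk)) as [a [Na Hj]].
  exists a. intro y. split.
  - intros [Ha [i [[Hli Hik] ->]]]. exists i. split; [|reflexivity].
    destruct (Nat.eq_dec i l) as [->|Hne]; [contradiction|lia].
  - intros [i [[Hli Hik] ->]]. split.
    + apply Hj. split; [apply mono_lt; auto | apply mono_le; auto].
    + exists i; split; [lia|reflexivity].
Qed.
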